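(* Let $X$ be a scalable monoid over a ring $R$. The relation $\sim$ on $X$ is a congruence with respect to the operations $(x,y)\mapsto xy$ and $(\lambda,x)\mapsto\lambda\cdot x$; that is, if $x\sim x'$ and $y\sim y'$ then $xy\sim x'y'$, and if $x\sim x'$ then $\lambda\cdot x\sim\lambda\cdot x'$ for every $\lambda\in R$.
   Context: A scalable monoid over a (unital, associative, not necessarily commutative) ring $R$ is a monoid $X$ (identity $1_X$, product written $xy$) together with a map $R\times X\to X$, $(\alpha,x)\mapsto\alpha\cdot x$, such that $1\cdot x=x$, $\alpha\cdot(\beta\cdot x)=\alpha\beta\cdot x$ and $\alpha\cdot(xy)=(\alpha\cdot x)y=x(\alpha\cdot y)$ for all $\alpha,\beta\in R$, $x,y\in X$. The relation $\sim$ on $X$ is defined by $x\sim y$ iff $\alpha\cdot x=\beta\cdot y$ for some $\alpha,\beta\in R$; it is an equivalence relation. *)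

(* Defs.v *)
From mathcomp Require Import all_boot all_algebra.
Set Implicit Arguments. Unset Strict Implicit. Unset Printing Implicit Defensive.
Import GRing.Theory.
Local Open Scope ring_scope.

Record scalable_monoid (R : pzRingType) := ScalableMonoid {
  sm_carrier :> Type;
  sm_one : sm_carrier;
  sm_mul : sm_carrier -> sm_carrier -> sm_carrier;
  sm_scale : R -> sm_carrier -> sm_carrier;
  sm_mulA : forall x y z, sm_mul x (sm_mul y z) = sm_mul (sm_mul x y) z;
  sm_mul1x : forall x, sm_mul sm_one x = x;
  sm_mulx1 : forall x, sm_mul x sm_one = x;
  sm_scale1 : forall x, sm_scale 1 x = x;
  sm_scaleA : forall (a b : R) x, sm_scale a (sm_scale b x) = sm_scale (a * b) x;
  sm_scale_mull : forall (a : R) x y, sm_scale a (sm_mul x y) = sm_mul (sm_scale a x) y;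
  sm_scale_mulr : forall (a : R) x y, sm_scale a (sm_mul x y) = sm_mul x (sm_scale a y)
}.

Definition sm_sim (R : pzRingType) (X : scalable_monoid R) (x y : X) : Prop :=
  exists a b : R, sm_scale a x = sm_scale b y.

(* Main.v *)
Require Import Defs.
From mathcomp Require Import all_boot all_algebra.
Local Open Scope ring_scope.
Import GRing.Theory.

Theorem proposition2p13 (R : pzRingType) (X : scalable_monoid R) :
  (forall x x' y y' : X, sm_sim x x' -> sm_sim y y' ->
      sm_sim (sm_mul x y) (sm_mul x' y')) /\
  (forall (lam : R) (x x' : X), sm_sim x x' ->
      sm_sim (sm_scale lam x) (sm_scale lam x')).
Proof.
split.
- move=> x x' y y' [a [b H1]] [c [d H2]].
  exists (c * a), (d * b).
  rewrite -!sm_scaleA sm_scale_mull sm_scale_mulr H1 H2.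
  by rewrite -sm_scale_mulr -sm_scale_mull.
- move=> lam x x' [a [b H]].
  exists 0, 0.
  rewrite !sm_scaleA !mul0r.
  have E1 : sm_scale 0 x = sm_scale (0 * a) x by rewrite mul0r.
  have E2 : sm_scale 0 x' = sm_scale (0 * b) x' by rewrite mul0r.
  by rewrite E1 E2 -!sm_scaleA H.
Qed.
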